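(* For any finite simple graph $G$, $\mathrm{mur}(G)=\mathrm{mur}(\overline{G})$, where $\overline{G}$ is the complement of $G$.
   Context: For a finite simple undirected graph $G$ on vertices $v_1,\dots,v_n$, let $A_G$ be its $(0,1)$-adjacency matrix, $D_G=\mathrm{diag}(d_1,\dots,d_n)$ with $d_i$ the degree of $v_i$, $I$ the $n\times n$ identity matrix and $J$ the $n\times n$ all-ones matrix. A universal adjacency matrix of $G$ is any matrix $\alpha A_G+\beta I+\gamma J+\delta D_G$ with real scalars $\alpha,\beta,\gamma,\delta$ and $\alpha\neq 0$. The minimum universal rank $\mathrm{mur}(G)$ is the minimum rank over all universal adjacency matrices of $G$. *)

(* Defs.v *)
From mathcomp Require Import all_boot all_order all_algebra.
From mathcomp Require Import boolp reals.
Set Implicit Arguments. Unset Strict Implicit. Unset Printing Implicit Defensive.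
Import GRing.Theory Num.Theory.
Local Open Scope ring_scope.

Definition simple_graph (n : nat) (e : rel 'I_n) : Prop :=
  (forall i, ~~ e i i) /\ (forall i j, e i j = e j i).

Definition compl_graph (n : nat) (e : rel 'I_n) : rel 'I_n :=
  fun i j => (i != j) && ~~ e i j.

Section UA.
Variable R : realType.
Variable n : nat.
Variable e : rel 'I_n.

Definition adjmx : 'M[R]_n := \matrix_(i, j) (e i j)%:R.
Definition degmx : 'M[R]_n := \matrix_(i, j) (if i == j then (#|[set k | e i k]|)%:R else 0).
Definition Jmx : 'M[R]_n := const_mx 1.

Definition univ_adj (a b c d : R) : 'M[R]_n :=
  a *: adjmx + b *: 1%:M + c *: Jmx + d *: degmx.

Definition univ_rank (r : nat) : Prop :=
  exists a b c d : R, a != 0 /\ \rank (univ_adj a b c d) = r.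

Lemma univ_rank_ex : exists r, (fun r => `[< univ_rank r >]) r.
Proof.
exists (\rank (univ_adj 1 0 0 0)); apply/asboolP.
by exists 1, 0, 0, 0; split; [exact: oner_neq0|].
Qed.

Definition mur : nat := ex_minn univ_rank_ex.
End UA.

(* Main.v *)
Require Import Defs.
From mathcomp Require Import all_boot all_order all_algebra.
From mathcomp Require Import boolp reals.
From mathcomp Require Import ring zify.
Import GRing.Theory Num.Theory.
Local Open Scope ring_scope.

Lemma deg_compl (n : nat) (e e' : rel 'I_n) (i : 'I_n) :
  ~~ e i i -> (forall j, e' i j = (i != j) && ~~ e i j) ->
  (#|[set k | e' i k]| + #|[set k | e i k]| + 1 = n)%N.
Proof.
move=> Hii He'.
have -> : [set k | e' i k] = ~: (i |: [set k | e i k]).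
  apply/setP => k; rewrite !inE He' eq_sym; by case: (k == i).
have := cardsC (i |: [set k | e i k]); rewrite cardsU1 inE (negbTE Hii) card_ord.
lia.
Qed.

Lemma transfer (R : realType) (n : nat) (e e' : rel 'I_n) :
  (forall i, ~~ e i i) -> (forall i j, e' i j = (i != j) && ~~ e i j) ->
  forall r, univ_rank R e r -> univ_rank R e' r.
Proof.
move=> Hirr He' r [a [b [c [d [Ha <-]]]]].
exists (-a), (b - a + d * (n.-1)%:R), (a + c), (-d); split.
  by rewrite oppr_eq0.
congr (\rank _); apply/matrixP => i j.
rewrite !mxE He'.
have Hd := @deg_compl n e e' i (Hirr i) (He' i).
case: (eqVneq i j) => [<-|Hij] /=.
  rewrite (negbTE (Hirr i)) /=.
  have Hn : (n.-1)%:R = #|[set k | e' i k]|%:R + #|[set k | e i k]|%:R :> R.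
    by rewrite -natrD -[in LHS]Hd addn1.
  rewrite Hn /=. ring.
case: (e i j) => /=; ring.
Qed.

Lemma mur_le (R : realType) (n : nat) (e e' : rel 'I_n) :
  (forall r, univ_rank R e r -> univ_rank R e' r) -> (mur R e' <= mur R e)%N.
Proof.
move=> H; rewrite /mur.
case: (ex_minnP (univ_rank_ex R e)) => m Pm _.
case: (ex_minnP (univ_rank_ex R e')) => m' _ min'.
apply: min'; apply/asboolP; apply: H; exact/asboolP.
Qed.

Theorem lemma1 (R : realType) (n : nat) (e : rel 'I_n) :
  simple_graph e -> mur R e = mur R (compl_graph e).
Proof.
move=> [Hirr _]; apply/eqP; rewrite eqn_leq; apply/andP; split.
  apply: mur_le; apply: transfer.
  - by move=> i; rewrite /compl_graph eqxx.
  - move=> i j; rewrite /compl_graph negb_and negbK.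
    case: (eqVneq i j) => [->|] /=; first by rewrite (negbTE (Hirr j)).
    by move=> _; case: (e i j).
apply: mur_le; apply: transfer => //.
Qed.
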